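(* For every positive integer $m$ and prime power $q$, $\sigma(Sp_{2m}(q))=\sigma(S_{2m}(q))$, where $S_{2m}(q)=PSp_{2m}(q)$ is the quotient of $Sp_{2m}(q)$ by its center.
   Context: The covering number $\sigma(G)$ of a group $G$ is the least positive integer $n$ such that $G$ is the union of $n$ proper subgroups, with $\sigma(G)=\infty$ if no finite such union exists. $Sp_{2m}(q)$ is the symplectic group of a nondegenerate alternating form on $\mathbb{F}_q^{2m}$. *)

(* Defs.v *)
From HB Require Import structures.
From mathcomp Require Import all_boot all_order all_algebra all_fingroup all_solvable.
From Stdlib Require Import ClassicalEpsilon.
Set Implicit Arguments. Unset Strict Implicit. Unset Printing Implicit Defensive.
Import GRing.Theory.

Local Open Scope group_scope.

(* Covering number of a finite group G: the least n such that G is the union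
   of n proper subgroups; None encodes sigma(G) = infinity. *)
Definition covered_byb (gT : finGroupType) (G : {set gT}) (n : nat) : bool :=
  [exists Hs : {ffun 'I_n -> {group gT}},
     [forall i, Hs i \proper G] && (G \subset \bigcup_(i < n) Hs i)].

Definition covering_number (gT : finGroupType) (G : {set gT}) : option nat :=
  match excluded_middle_informative (exists n, covered_byb G n) with
  | left H => Some (ex_minn H)
  | right _ => None
  end.

(* Standard nondegenerate alternating form on F^(2k): matrix [[0, I_k], [-I_k, 0]],
   written entrywise on 'M_n (used with n = 2k). *)
Definition symJ (F : finFieldType) (k n : nat) : 'M[F]_n :=
  \matrix_(i < n, j < n)
    (if (i < k)%N && (j == (i + k)%N :> nat) then 1
     else if (k <= i)%N && (i == (j + k)%N :> nat) then -1 else 0)%R.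

Definition Sp_set (F : finFieldType) (k : nat) : {set {'GL_(k.*2)[F]}} :=
  [set g : {'GL_(k.*2)[F]} |
     (GLval g *m symJ F k _ *m (GLval g)^T == symJ F k _)%R].

Lemma Sp_group_set (F : finFieldType) (k : nat) : group_set (Sp_set F k).
Proof.
apply/group_setP; split.
  by rewrite inE /= trmx1 mul1mx mulmx1.
move=> x y; rewrite !inE /= => /eqP Hx /eqP Hy.
rewrite trmx_mul !mulmxA -(mulmxA _ (GLval y)) -(mulmxA _ _ (GLval y)^T) Hy.
by apply/eqP; exact: Hx.
Qed.

Canonical Sp_group (F : finFieldType) (k : nat) := Group (Sp_group_set F k).

Definition PSp_group (F : finFieldType) (k : nat) :=
  (Sp_group F k / 'Z(Sp_group F k))%G.

(* Main.v *)
Require Import Defs.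
From mathcomp Require Import all_boot all_order all_algebra all_fingroup all_solvable.
From mathcomp Require Import zify ring.
Set Implicit Arguments. Unset Strict Implicit. Unset Printing Implicit Defensive.
Import GRing.Theory.
Section P1.
Local Open Scope group_scope.

Lemma cover_quo (gT : finGroupType) (G N : {group gT}) :
  N <| G -> (forall H : {group gT}, H \subset G -> G \subset N * H -> G \subset H) ->
  forall n, covered_byb G n = covered_byb (G / N) n.
Proof.
move=> /andP[sNG nNG] hyp n; apply/idP/idP.
- case/existsP=> Hs /andP[/forallP pr cov].
  apply/existsP; exists [ffun i => (Hs i / N)%G]; apply/andP; split.
    apply/forallP=> i; rewrite ffunE /=.
    have /andP[sHG nGH] := pr i.
    rewrite properE quotientS //= quotientSK //.
    by apply: contra nGH; apply: hyp.
  apply/subsetP=> y /morphimP[x Nx Gx ->].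
  have := subsetP cov x Gx; case/bigcupP=> i _ xH.
  apply/bigcupP; exists i => //; rewrite ffunE /=.
  by apply: mem_quotient.
- case/existsP=> Ks /andP[/forallP pr cov].
  apply/existsP; exists [ffun i => (G :&: coset N @*^-1 (Ks i))%G]; apply/andP; split.
    apply/forallP=> i; rewrite ffunE /=.
    have /andP[sKG nGK] := pr i.
    rewrite properE subsetIl /=.
    apply: contra nGK => E.
    rewrite -(cosetpreK (Ks i)); apply: quotientS.
    by apply: subset_trans E (subsetIr _ _).
  apply/subsetP=> x Gx.
  have Nx : x \in 'N(N) := subsetP nNG x Gx.
  have := subsetP cov (coset N x) (mem_quotient N Gx); case/bigcupP=> i _ xK.
  apply/bigcupP; exists i => //; rewrite ffunE /= inE Gx /=.
  by rewrite mem_morphpre.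
Qed.

Definition cn_of (P : pred nat) : option nat :=
  match ClassicalEpsilon.excluded_middle_informative (exists n, P n) with
  | left H => Some (ex_minn H)
  | right _ => None
  end.

Lemma cn_ext (P Q : pred nat) : P =1 Q -> cn_of P = cn_of Q.
Proof.
move=> E; rewrite /cn_of.
case: ClassicalEpsilon.excluded_middle_informative => [h1|h1];
case: ClassicalEpsilon.excluded_middle_informative => [h2|h2] //.
- by congr Some; apply: eq_ex_minn.
- by case: h2; case: h1 => x hx; exists x; rewrite -E.
- by case: h1; case: h2 => x hx; exists x; rewrite E.
Qed.

Lemma cover_number_quo (gT : finGroupType) (G N : {group gT}) :
  N <| G -> (forall H : {group gT}, H \subset G -> G \subset N * H -> G \subset H) ->
  covering_number G = covering_number (G / N).
Proof.
move=> nN hyp.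
change (cn_of (covered_byb G) = cn_of (covered_byb (G / N))).
by apply: cn_ext => n; apply: cover_quo.
Qed.

End P1.
Section P2.
Local Open Scope group_scope.

Lemma center_hyp (gT : finGroupType) (G : {group gT}) (j : gT) :
  j \in G -> j ^+ 4 = 1 -> (forall z, z \in 'Z(G) -> z = 1 \/ z = j ^+ 2) ->
  forall H : {group gT}, H \subset G -> G \subset 'Z(G) * H -> G \subset H.
Proof.
move=> Gj j4 Zj H sHG sGZH.
have zsq z : z \in 'Z(G) -> z ^+ 2 = 1.
  move=> /Zj [->|->]; first by rewrite expg1n.
  by rewrite -expgM.
have j2H : j ^+ 2 \in H.
  case/mulsgP: (subsetP sGZH j Gj) => z h Zz Hh def.
  have /centerP[_ cz] := Zz.
  have czh : commute z h := cz h (subsetP sHG h Hh).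
  by rewrite def expgMn // zsq // mul1g groupX.
apply/subsetP=> g Gg; case/mulsgP: (subsetP sGZH g Gg) => z h Zz Hh ->.
by apply: groupM => //; case: (Zj z Zz) => ->; rewrite ?group1.
Qed.

End P2.


Section Mx.
Local Open Scope ring_scope.
Variables (F : finFieldType) (m : nat).
Local Notation k := m.+1.
Local Notation n := m.*2.+2.
Local Notation J := (symJ F k n).

Definition pp (r : 'I_n) : 'I_n := inord (if (r < k)%N then (r + k)%N else (r - k)%N).
Definition sg (r : 'I_n) : F := if (r < k)%N then 1 else -1.

Lemma ltn_2k (r : 'I_n) : (r < k + k)%N.
Proof. move: (nat_of_ord r) (ltn_ord r) => x; rewrite -addnn; lia. Qed.

Lemma pp_val r : (pp r : nat) = if (r < k)%N then (r + k)%N else (r - k)%N.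
Proof.
rewrite /pp inordK //; have := ltn_2k r; case: ifP => h; move: (nat_of_ord r) h => x; lia.
Qed.

Lemma pp_invol r : pp (pp r) = r.
Proof.
apply: val_inj; rewrite /= !pp_val; have := ltn_2k r.
case: (ltnP r k) => h1 h2; case: ifP; lia.
Qed.

Lemma pp_lt r : (pp r < k)%N = ~~ (r < k)%N.
Proof. rewrite pp_val; have := ltn_2k r; case: (ltnP r k); lia. Qed.

Lemma sg_pp r : sg (pp r) = - sg r.
Proof. by rewrite /sg pp_lt; case: (r < k)%N; rewrite ?opprK. Qed.

Lemma pp_neq r : (pp r == r) = false.
Proof. apply/negbTE/negP => /eqP E; have := pp_lt r; rewrite E; by case: (r < k)%N. Qed.

Lemma Jrow r l : J r l = sg r * (l == pp r)%:R.
Proof.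
have -> : (l == pp r) = (nat_of_ord l == (if (r < k)%N then (r + k)%N else (r - k)%N)) by rewrite -val_eqE /= pp_val.
rewrite /symJ mxE /sg; have := ltn_2k r; have := ltn_2k l.
case: (ltnP r k) => h /= hl hr.
  by case: eqP; rewrite ?mul1r.
have -> : (nat_of_ord r == (l + k)%N) = (nat_of_ord l == (r - k)%N) by apply/eqP/eqP; lia.
by case: eqP; rewrite ?mulr1 ?mulr0.
Qed.

Lemma Jcol l s : J l s = - sg s * (l == pp s)%:R.
Proof.
rewrite Jrow; have -> : (s == pp l) = (l == pp s).
  by apply/eqP/eqP => [->|->]; rewrite pp_invol.
by case: eqP => [->|]; rewrite ?mulr0 // sg_pp.
Qed.

Lemma mulJmx (A : 'M[F]_n) r s : (J *m A) r s = sg r * A (pp r) s.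
Proof.
rewrite mxE (bigD1 (pp r)) //= big1 ?addr0; first by rewrite Jrow eqxx mulr1.
by move=> l /negbTE nl; rewrite Jrow nl mulr0 mul0r.
Qed.

Lemma mulmxJ (A : 'M[F]_n) r s : (A *m J) r s = - A r (pp s) * sg s.
Proof.
rewrite mxE (bigD1 (pp s)) //= big1 ?addr0; first by rewrite Jcol eqxx mulr1 mulrN mulNr.
by move=> l /negbTE nl; rewrite Jcol nl mulr0 mulr0.
Qed.

Lemma mul_delta_l (A : 'M[F]_n) (a b r s : 'I_n) : (delta_mx a b *m A) r s = (r == a)%:R * A b s.
Proof.
rewrite mxE (bigD1 b) //= big1 ?addr0; first by rewrite mxE eqxx andbT.
by move=> l /negbTE nl; rewrite mxE nl andbF mul0r.
Qed.

Lemma mul_delta_r (A : 'M[F]_n) (a b r s : 'I_n) : (A *m delta_mx a b) r s = A r a * (s == b)%:R.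
Proof.
rewrite mxE (bigD1 a) //= big1 ?addr0; first by rewrite mxE eqxx.
by move=> l /negbTE nl; rewrite mxE nl mulr0.
Qed.

Lemma J2 : J *m J = -1.
Proof.
apply/matrixP=> r s; rewrite mulJmx Jrow sg_pp pp_invol !mxE mulrA mulrN.
by rewrite /sg; case: (r < k)%N; rewrite (eq_sym s); case: eqP; rewrite ?mulr0 ?oppr0 ?mulr1 ?mul1r ?mulrN1 ?opprK ?mulrN ?mulN1r ?opprK. 
Qed.


Lemma isSp_add (N : 'M[F]_n) : N *m J + (J *m N^T + N *m J *m N^T) = 0 ->
  (1%:M + N) *m J *m (1%:M + N)^T = J.
Proof.
move=> h; rewrite linearD /= trmx1 mulmxDl mul1mx !mulmxDr !mulmx1 mulmxDl -addrA.
by rewrite h addr0.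
Qed.

Lemma addE (A B : 'M[F]_n) x y : (A + B) x y = A x y + B x y.
Proof. by rewrite mxE. Qed.
Lemma zeroE x y : (0 : 'M[F]_n) x y = 0.
Proof. by rewrite mxE. Qed.

Lemma ind_eq (a b : 'I_n) : (a == b)%:R * (a == b)%:R = (a == b)%:R :> F.
Proof. by case: eqP; rewrite ?mulr0 ?mulr1. Qed.

Lemma Sp_single r : let N := delta_mx r (pp r) in
  (1%:M + N) *m J *m (1%:M + N)^T = J.
Proof.
move=> N; apply: isSp_add; rewrite /N trmx_delta.
rewrite -mulmxA; apply/matrixP=> x y; rewrite !addE zeroE mul_delta_l mul_delta_r mul_delta_l mul_delta_r.
rewrite (Jrow (pp r) y) (Jcol x (pp r)) (Jrow (pp r) (pp r)) !pp_invol pp_neq !mulr0 mul0r mulr0 addr0.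
by case: (x == r); case: (y == r); rewrite ?mulr0 ?mul0r ?mulr1 ?mul1r ?addr0 ?mulrN ?mulNr ?addNr ?subrr ?oppr0.
Qed.

Lemma pp_ne_lt (a b : 'I_n) : (a < k)%N -> (b < k)%N -> (pp b == a) = false.
Proof.
move=> ha hb; apply/negbTE/negP=> /eqP E.
by have := pp_lt b; rewrite E ha hb.
Qed.

Lemma sg_lt (a : 'I_n) : (a < k)%N -> sg a = 1.
Proof. by rewrite /sg => ->. Qed.

Lemma Sp_pair (i j : 'I_n) : (i < k)%N -> (j < k)%N ->
  let N := delta_mx i (pp j) + delta_mx j (pp i) in
  (1%:M + N) *m J *m (1%:M + N)^T = J.
Proof.
move=> hi hj N; apply: isSp_add; rewrite /N linearD /= !trmx_delta -mulmxA.
rewrite !(mulmxDl, mulmxDr).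
apply/matrixP=> x y; rewrite !addE zeroE !mul_delta_l !mul_delta_r.
rewrite (Jcol x (pp j)) (Jcol x (pp i)) !Jrow !pp_invol !pp_ne_lt // !sg_pp !sg_lt //.
move: ((x == i)%:R : F) ((x == j)%:R : F) ((y == i)%:R : F) ((y == j)%:R : F) => a b c d.
clear N; rewrite !mulr0 ?addr0 !mulN1r !opprK !mul1r; rewrite addrC !addrA.
ring.
Qed.

Lemma comm_add (Z N : 'M[F]_n) : Z *m (1%:M + N) = (1%:M + N) *m Z -> Z *m N = N *m Z.
Proof. by rewrite mulmxDr mulmxDl mulmx1 mul1mx => /addrI. Qed.

Lemma center_scalar (Z : 'M[F]_n) :
  (forall r, Z *m delta_mx r (pp r) = delta_mx r (pp r) *m Z) ->
  (forall i j : 'I_n, (i < k)%N -> (j < k)%N ->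
     Z *m (delta_mx i (pp j) + delta_mx j (pp i)) =
     (delta_mx i (pp j) + delta_mx j (pp i)) *m Z) ->
  Z = (Z ord0 ord0)%:M.
Proof.
move=> hs hp.
have offd x y : x != y -> Z x y = 0.
  move=> /negbTE nxy; have := congr1 (fun M : 'M[F]_n => M x (pp y)) (hs y) => /=.
  by rewrite mul_delta_r mul_delta_l eqxx nxy mulr1 mul0r.
have D1 r : Z r r = Z (pp r) (pp r).
  have := congr1 (fun M : 'M[F]_n => M r (pp r)) (hs r) => /=.
  by rewrite mul_delta_r mul_delta_l !eqxx mulr1 mul1r.
have D2 (i j : 'I_n) : (i < k)%N -> (j < k)%N -> Z i i = Z j j.
  move=> hi hj; case: (eqVneq i j) => [->//|nij].
  have := congr1 (fun M : 'M[F]_n => M i (pp j)) (hp i j hi hj) => /=.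
  rewrite mulmxDr mulmxDl !addE !mul_delta_r !mul_delta_l !eqxx (negbTE nij) (offd i j nij).
  have -> : (pp j == pp i) = false by apply/negbTE; apply: contra nij => /eqP/(congr1 pp); rewrite !pp_invol => ->.
  by rewrite !mulr0 mul0r !addr0 mulr1 mul1r (D1 j) => ->.
have h0 : (@ord0 (m.*2.+1) < k)%N by [].
apply/matrixP=> x y; rewrite mxE; case: (eqVneq x y) => [->|nxy]; last by rewrite offd // mulr0n.
rewrite mulr1n; case: (ltnP y k) => hy; first by apply: D2.
by rewrite D1; apply: D2 => //; rewrite pp_lt -leqNgt.
Qed.

Lemma scalar_sq (c : F) : (c%:M : 'M[F]_n) *m J *m (c%:M)^T = J -> c = 1 \/ c = -1.
Proof.
rewrite tr_scalar_mx mul_scalar_mx mul_mx_scalar scalerA => h.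
have := congr1 (fun M : 'M[F]_n => M ord0 (pp ord0)) h => /=.
rewrite mxE Jrow eqxx /sg /= mulr1 => e.
have /eqP: c ^+ 2 = 1 by rewrite expr2 -[RHS]e mulr1.
by rewrite sqrf_eq1 => /orP[/eqP|/eqP]; [left|right].
Qed.

Lemma J_sp : J *m J *m J^T = J.
Proof.
have JT : J^T = - J.
  by apply/matrixP=> x y; rewrite [LHS]mxE [RHS]mxE Jrow Jcol mulNr opprK.
by rewrite JT J2 mulmxN mulNmx mul1mx opprK.
Qed.
End Mx.


Section Fin.
Local Open Scope ring_scope.
Variables (F : finFieldType) (m : nat).
Local Notation n := m.*2.+2.
Local Notation J := (symJ F m.+1 n).
Local Notation GLT := {'GL_(m.+1).*2[F]}.

Lemma sp_unit (M : 'M[F]_n) : M *m J *m M^T = J -> M \in unitmx.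
Proof.
move=> h; have [] // := @mulmx1_unit _ _ M (J *m M^T *m - J).
by rewrite !mulmxA h mulmxN J2 opprK.
Qed.

Definition mkGL (M : 'M[F]_n) (h : M *m J *m M^T = J) : GLT := Sub M (sp_unit h).

Lemma mkGL_val M h : GLval (@mkGL M h) = M.
Proof. by []. Qed.

Lemma mkGL_in M h : @mkGL M h \in Sp_group F m.+1.
Proof. by rewrite inE /= h. Qed.


Definition Jg : GLT := mkGL (J_sp F m).

Lemma Jg2 : GLval (Jg ^+ 2)%g = -1.
Proof. by rewrite expgS expg1 GL_MxE /= J2. Qed.

Lemma Jg4 : (Jg ^+ 4 = 1)%g.
Proof.
apply: val_inj; change (GLval (Jg ^+ (2 + 2))%g = GLval 1%g).
rewrite expgD GL_MxE Jg2 GL_1E.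
by rewrite mulmxN mulNmx mul1mx opprK.
Qed.

Lemma center_elts (z : GLT) : (z \in 'Z(Sp_group F m.+1))%g -> z = 1%g \/ z = (Jg ^+ 2)%g.
Proof.
case/centerP=> Gz cz.
have comm (M : 'M[F]_n) (h : M *m J *m M^T = J) : GLval z *m M = M *m GLval z.
  have := congr1 GLval (cz _ (mkGL_in h)).
  by rewrite !GL_MxE.
have hs r : GLval z *m delta_mx r (pp r) = delta_mx r (pp r) *m GLval z.
  by apply: comm_add; apply: comm; apply: Sp_single.
have hp (i j : 'I_n) : (i < m.+1)%N -> (j < m.+1)%N ->
     GLval z *m (delta_mx i (pp j) + delta_mx j (pp i)) =
     (delta_mx i (pp j) + delta_mx j (pp i)) *m GLval z.
  by move=> hi hj; apply: comm_add; apply: comm; apply: Sp_pair.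
have E := center_scalar hs hp.
have Zsp : GLval z *m J *m (GLval z)^T = J by move: Gz; rewrite inE => /eqP.
rewrite E in Zsp; case: (scalar_sq Zsp) => hc.
  by left; apply: val_inj; rewrite /= E hc.
right; apply: val_inj; change (GLval z = GLval (Jg ^+ 2)%g); rewrite Jg2 E hc.
by rewrite raddfN.
Qed.

End Fin.

Theorem mainTheorem4 (F : finFieldType) (m : nat) :
  covering_number (Sp_group F m.+1) = covering_number (PSp_group F m.+1).
Proof.
apply: cover_number_quo; first exact: center_normal.
move=> H sHG sGZH; apply: (@center_hyp _ _ (Jg F m)) => //.
- exact: mkGL_in.
- exact: Jg4.
- exact: center_elts.
Qed.
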